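(* Let $N=2$ with $Q=\{A,B\}$. For every $k>4L$, every window string $\vec n=(n_1,\dots,n_k)$ with $L\ge n_1\ge\cdots\ge n_k\ge1$, every $\vec q\in Q^k$ and every $\mu\in\{0,1\}^{k-1}$, the string $\vec n$ contains five equal consecutive entries $n_{i-2}=\cdots=n_{i+2}$, and consequently there exist $\vec n'$ (of length $k-2$, obtained from $\vec n$ by deleting two of these five entries), $\vec q'\in Q^{k-2}$, $\mu'\in\{0,1\}^{k-3}$ and a scalar $c$ independent of $U_1,\dots,U_L$ and $\tilde O$ with $\mathbf{T}^{(k)}_{\vec q;\mu}(\vec n)=c\,\mathbf{T}^{(k-2)}_{\vec q';\mu'}(\vec n')$. In particular all two-qubit control tensors reduce to those of order at most $4L$.
   Context: Fix integers $L\ge 1$ and $N\ge 1$, and a set $Q$ of $N$ qubit labels. For $q\in Q$ let $\sigma_z^{[q]}$ denote the Pauli-$Z$ operator acting on qubit $q$ tensored with the identity on all other qubits of $(\mathbb{C}^2)^{\otimes N}$. (Digital control) Let $U_1,\dots,U_L$ be arbitrary unitaries on $(\mathbb{C}^2)^{\otimes N}$ ($U_n$ is the control propagator, constant on the $n$-th time window), and let $\tilde O$ be an arbitrary Hermitian unitary operator on $(\mathbb{C}^2)^{\otimes N}$ (the toggling-frame observable). For $q\in Q$ and $n\in\{1,\dots,L\}$ define $\tilde h_q(n)=U_n^\dagger\sigma_z^{[q]}U_n$ and $\bar h_q(n)=-\tilde O^{-1}\tilde h_q(n)\tilde O$. For $k\ge1$, a window string $\vec n=(n_1,\dots,n_k)$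 with $L\ge n_1\ge\cdots\ge n_k\ge1$, a qubit string $\vec q=(q_1,\dots,q_k)\in Q^k$ and a sign string $\mu\in\{0,1\}^{k-1}$, the (window-framed) control tensor is $$\mathbf{T}^{(k)}_{\vec q;\mu}(\vec n)=\sum_{b\in\{0,1\}^k}(-1)^{\sum_{j=1}^{k-1}\mu_j b_{j+1}}\Big(\prod^{\downarrow}_{i:\,b_i=1}\bar h_{q_i}(n_i)\Big)\Big(\prod^{\uparrow}_{i:\,b_i=0}\tilde h_{q_i}(n_i)\Big),$$ where $\prod^{\downarrow}$ is the ordered product with the index $i$ decreasing from left to right, $\prod^{\uparrow}$ is the ordered product with $i$ increasing from left to right, and an empty product is the identity. When $N=1$ the qubit string is omitted and we write $\mathbf{T}^{(k)}_{\mu}(\vec n)$. *)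

(* Defs.v *)
From HB Require Import structures.
From mathcomp Require Import all_boot all_order all_algebra.
From mathcomp Require Import mxtens.
Set Implicit Arguments. Unset Strict Implicit. Unset Printing Implicit Defensive.
Import Order.TTheory GRing.Theory Num.Theory.
Local Open Scope ring_scope.

(* Two-qubit setting N = 2, Q = {A, B} encoded as 'I_2 (A = 0, B = 1).
   Operators on (C^2) (x) (C^2) are 4x4 matrices over a numeric closed
   field C (e.g. the complex numbers), basis |00>,|01>,|10>,|11>. *)

Section Defs.
Variable C : numClosedFieldType.

Definition adjmx (M : 'M[C]_4) : 'M[C]_4 := (map_mx Num.conj M)^T.

Definition unitary_mx (M : 'M[C]_4) : Prop :=
  adjmx M *m M = 1%:M /\ M *m adjmx M = 1%:M.

Definition hermitian_mx (M : 'M[C]_4) : Prop := adjmx M = M.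

Definition pauliZ : 'M[C]_2 := \matrix_(i, j) (if i == j then (-1) ^+ i else 0).

Definition sigz (q : 'I_2) : 'M[C]_4 :=
  if q == 0%R then (pauliZ *t (1%:M : 'M[C]_2) : 'M[C]_4)
  else ((1%:M : 'M[C]_2) *t pauliZ : 'M[C]_4).

Definition htilde (U : nat -> 'M[C]_4) (q : 'I_2) (n : nat) : 'M[C]_4 :=
  adjmx (U n) *m sigz q *m U n.

Definition hbar (U : nat -> 'M[C]_4) (O : 'M[C]_4) (q : 'I_2) (n : nat)
  : 'M[C]_4 :=
  - (invmx O *m htilde U q n *m O).

(* Strings are 0-indexed sequences:
   n = (n_1..n_k) is [:: nth 0 n 0; ...], mu_j = nth false mu (j-1), and
   b ranges over {0,1}^k as k-tuples of booleans. The sign exponent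
   sum_{j=1}^{k-1} mu_j b_{j+1} becomes sum_{j<k-1} mu_j b_{j+1}
   (0-indexed).  The first product is over i with b_i = 1, i decreasing
   from left to right (rev_ord); the second over i with b_i = 0, i
   increasing from left to right. *)
Definition ctensor (U : nat -> 'M[C]_4) (O : 'M[C]_4) (k : nat)
  (n : seq nat) (q : seq 'I_2) (mu : seq bool) : 'M[C]_4 :=
  \sum_(b : k.-tuple bool)
    ((-1) ^+ (\sum_(j < k.-1) (nth false mu j && nth false b j.+1))%N) *:
    ((\prod_(i < k | nth false b (rev_ord i))
        hbar U O (nth 0 q (rev_ord i)) (nth 0%N n (rev_ord i)))
     *m
     (\prod_(i < k | ~~ nth false b i)
        htilde U (nth 0 q i) (nth 0%N n i))).

End Defs.

Definition window_string (L k : nat) (n : seq nat) : Prop :=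
  size n = k /\ sorted geq n /\ all (fun m => (1 <= m <= L)%N) n.

Definition five_equal_at (n : seq nat) (i : nat) : Prop :=
  (2 <= i)%N /\ (i + 2 < size n)%N /\
  forall j, (i - 2 <= j <= i + 2)%N -> nth 0%N n j = nth 0%N n i.

Definition delete2 (T : Type) (s : seq T) (j1 j2 : nat) : seq T :=
  [seq x.2 | x <- zip (iota 0 (size s)) s & (x.1 != j1) && (x.1 != j2)].

(* Main.v *)
Require Import Defs.
From HB Require Import structures.
From mathcomp Require Import all_boot all_order all_algebra.
From mathcomp Require Import mxtens ring zify.
Import Order.TTheory GRing.Theory Num.Theory.
Local Open Scope ring_scope.
Set Implicit Arguments. Unset Strict Implicit.

Section Alg.
Variable C : numClosedFieldType.
Local Notation M := 'M[C]_4.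

Definition sg (e : bool) : C := if e then 1 else -1.
Definition Phi (x : M) (e : bool) (W : M) : M := W *m x + sg e *: (x *m W).

Lemma sg2 e : sg e * sg e = 1.
Proof. by case: e; rewrite /sg ?mulr1 ?mulrNN ?mulr1. Qed.

Lemma Phi_scale x e c W : Phi x e (c *: W) = c *: Phi x e W.
Proof.
by rewrite /Phi scalerDr -scalemxAl -scalemxAr !scalerA mulrC.
Qed.

Lemma Phi_comm x y e f W : x *m y = y *m x ->
  Phi x e (Phi y f W) = Phi y f (Phi x e W).
Proof.
move=> xy; rewrite /Phi !mulmxDl !mulmxDr -!scalemxAl -!scalemxAr !scalerDr.
rewrite !scalerA !mulmxA xy.
rewrite -!mulmxA xy (mulrC (sg e)) !mulmxA.
by rewrite addrACA.
Qed.

Lemma Phi_ann x e W : x *m x = 1%:M -> Phi x e (Phi x (~~ e) W) = 0.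
Proof.
move=> xx; rewrite /Phi !mulmxDl !mulmxDr -!scalemxAl -!scalemxAr !scalerDr.
rewrite !scalerA !mulmxA xx -!mulmxA xx mulmx1 mul1mx.
case: e; rewrite /sg /= ?mulr1 ?mul1r ?mulN1r ?mulrN1 ?opprK scaleN1r scale1r;
  rewrite ?scaleN1r ?scale1r.
- by rewrite addrA subrK subrr.
- by rewrite addrA addrK subrr.
Qed.

Lemma Phi_cube x e W : x *m x = 1%:M ->
  Phi x e (Phi x e (Phi x e W)) = 4%:R *: Phi x e W.
Proof.
move=> xx.
have H2 : Phi x e (Phi x e W) = 2%:R *: W + (2%:R * sg e) *: (x *m W *m x).
  rewrite /Phi !mulmxDl !mulmxDr -!scalemxAl -!scalemxAr !scalerDr.
  rewrite !scalerA !mulmxA xx -!mulmxA xx mulmx1 mul1mx sg2 scale1r !mulmxA.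
  by rewrite -scalerA !scaler_nat !mulr2n [X in _ + X]addrC addrACA.
rewrite H2 /Phi !mulmxDl !mulmxDr -!scalemxAl -!scalemxAr !scalerDr !scalerA.
rewrite !mulmxA xx -!mulmxA xx mulmx1 !mulmxA mul1mx.
rewrite [X in _ + X]addrC addrACA -!scalerDl.
have s2 := sg2 e.
congr (_ *: _ + _ *: _).
  by rewrite mulrCA s2; ring.
by ring.
Qed.
End Alg.

Section Alg.
Variable C : numClosedFieldType.
Local Notation M := 'M[C]_4.

Lemma tens11 m n : (1%:M : 'M[C]_m) *t (1%:M : 'M[C]_n) = 1%:M.
Proof.
apply/matrixP=> a b; case: (mxtens_indexP a)=> i j; case: (mxtens_indexP b)=> k l.
rewrite tensmxE !mxE (inj_eq (can_inj (@mxtens_indexK _ _))) xpair_eqE.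
by case: (i == k); case: (j == l); rewrite /= ?mulr1 ?mulr0 ?mul0r.
Qed.

Lemma ZZ : pauliZ C *m pauliZ C = 1%:M.
Proof.
apply/matrixP=> i j; rewrite !mxE !big_ord_recr big_ord0 /= !mxE.
case: i => [[|[|?]] ?] //; case: j => [[|[|?]] ?] //=; 
  rewrite ?mulr0 ?mul0r ?addr0 ?add0r ?expr0 ?expr1 ?mulr1 ?mulrNN //.
  all: by rewrite mulr1.
Qed.

Lemma sigz2 q : sigz C q *m sigz C q = 1%:M.
Proof.
rewrite /sigz; case: (q == 0).
- transitivity ((pauliZ C *m pauliZ C) *t (1%:M *m 1%:M) : 'M[C]_(2*2)).
    exact: (@tensmx_mul C 2 2 2 2 2 2).
  by rewrite ZZ mulmx1 tens11.
- transitivity ((1%:M *m 1%:M) *t (pauliZ C *m pauliZ C) : 'M[C]_(2*2)).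
    exact: (@tensmx_mul C 2 2 2 2 2 2).
  by rewrite ZZ mulmx1 tens11.
Qed.

Lemma sigzC q r : sigz C q *m sigz C r = sigz C r *m sigz C q.
Proof.
rewrite /sigz; case: (q == 0); case: (r == 0) => //.
- transitivity ((pauliZ C *m 1%:M) *t (1%:M *m pauliZ C) : 'M[C]_(2*2)).
    exact: (@tensmx_mul C 2 2 2 2 2 2).
  rewrite mulmx1 mul1mx.
  transitivity ((1%:M *m pauliZ C) *t (pauliZ C *m 1%:M) : 'M[C]_(2*2)).
    by rewrite mulmx1 mul1mx.
  symmetry; exact: (@tensmx_mul C 2 2 2 2 2 2).
- transitivity ((1%:M *m pauliZ C) *t (pauliZ C *m 1%:M) : 'M[C]_(2*2)).
    exact: (@tensmx_mul C 2 2 2 2 2 2).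
  rewrite mulmx1 mul1mx.
  transitivity ((pauliZ C *m 1%:M) *t (1%:M *m pauliZ C) : 'M[C]_(2*2)).
    by rewrite mulmx1 mul1mx.
  symmetry; exact: (@tensmx_mul C 2 2 2 2 2 2).
Qed.

Lemma htilde2 (U : nat -> M) q m : unitary_mx (U m) -> htilde U q m *m htilde U q m = 1%:M.
Proof.
move=> [H1 H2]; rewrite /htilde !mulmxA -(mulmxA _ (U m)) H2 mulmx1.
by rewrite -(mulmxA (adjmx (U m)) (sigz C q) (sigz C q)) sigz2 mulmx1 H1.
Qed.

Lemma htildeC (U : nat -> M) q r m : unitary_mx (U m) ->
  htilde U q m *m htilde U r m = htilde U r m *m htilde U q m.
Proof.
move=> [H1 H2]; rewrite /htilde !mulmxA -(mulmxA _ (U m) (adjmx _)) H2 mulmx1.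
rewrite -(mulmxA _ (U m) (adjmx _)) H2 mulmx1.
by rewrite -!(mulmxA (adjmx (U m))) sigzC.
Qed.

Lemma OO (O : M) : hermitian_mx O -> unitary_mx O -> O *m O = 1%:M.
Proof. by move=> H [H1 _]; rewrite -{1}H. Qed.

Lemma invO (O : M) : hermitian_mx O -> unitary_mx O -> invmx O = O.
Proof.
move=> H U; have HOO := OO H U.
have [uO _] := mulmx1_unit HOO.
by rewrite -[invmx O]mulmx1 -HOO mulmxA mulVmx // mul1mx.
Qed.
End Alg.

Section Rec.
Variable C : numClosedFieldType.
Local Notation M := 'M[C]_4.

Definition CTs k (X Y : nat -> M) (mu : seq bool) : M :=
  \sum_(b : k.-tuple bool)
    ((-1) ^+ (\sum_(j < k.-1) (nth false mu j && nth false b j.+1))%N) *: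
    ((\prod_(i < k | nth false b (rev_ord i)) Y (rev_ord i))
     *m (\prod_(i < k | ~~ nth false b i) X i)).

Lemma ctensorE (U : nat -> M) O k n q mu : ctensor U O k n q mu =
  CTs k (fun i => htilde U (nth 0 q i) (nth 0%N n i))
        (fun i => hbar U O (nth 0 q i) (nth 0%N n i)) mu.
Proof. by []. Qed.

Lemma rev_lift k (i : 'I_k) : (rev_ord (lift ord0 i) : nat) = rev_ord i.
Proof. by rewrite /= /bump /= subSS. Qed.

Lemma sign_rcons k (mu : seq bool) (t : k.-tuple bool) (x : bool) :
  (\sum_(j < k) (nth false mu j && nth false (rcons t x) j.+1))%N =
  ((\sum_(j < k.-1) (nth false mu j && nth false t j.+1)) +
    (nth false (false :: mu) k && x))%N.
Proof.
case: k t => [|k] t; first by rewrite !big_ord0.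
rewrite big_ord_recr /= nth_rcons size_tuple ltnn eqxx; congr (_ + _)%N.
by apply: eq_bigr => j _; rewrite nth_rcons size_tuple ltnS ltn_ord.
Qed.

Lemma prodY_rcons k (Y : nat -> M) (t : k.-tuple bool) (x : bool) :
  \prod_(i < k.+1 | nth false (rcons t x) (rev_ord i)) Y (rev_ord i) =
  (if x then Y k else 1) * \prod_(i < k | nth false t (rev_ord i)) Y (rev_ord i).
Proof.
rewrite big_mkcond big_ord_recl /= subn1 /= nth_rcons size_tuple ltnn eqxx.
rewrite [in RHS]big_mkcond; congr (_ * _); apply: eq_bigr => i _.
rewrite /bump leq0n add1n subSS nth_rcons size_tuple.
by rewrite (_ : (k - i.+1 < k)%N = true) //; have := ltn_ord i; lia.
Qed.

Lemma prodX_rcons k (X : nat -> M) (t : k.-tuple bool) (x : bool) :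
  \prod_(i < k.+1 | ~~ nth false (rcons t x) i) X i =
  \prod_(i < k | ~~ nth false t i) X i * (if ~~ x then X k else 1).
Proof.
rewrite big_mkcond big_ord_recr /= nth_rcons size_tuple ltnn eqxx.
rewrite [in RHS]big_mkcond; congr (_ * _); apply: eq_bigr => i _.
by rewrite /= nth_rcons size_tuple ltn_ord.
Qed.

Lemma theadE n (b : n.+1.-tuple bool) : thead b :: behead b = b.
Proof. by case: b => [[|y s] //]. Qed.

Lemma tuple_rcons_bij k :
  bijective (fun p : k.-tuple bool * bool => [tuple of rcons p.1 p.2]).
Proof.
exists (fun b : k.+1.-tuple bool =>
  ([tuple of belast (thead b) (behead b)], last (thead b) (behead b))).
- move=> [t x] /=.
  have E := theadE [tuple of rcons t x].
  move: E; rewrite lastI => /rcons_inj [E1 E2].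
  by congr (_, _) => //; apply: val_inj.
- move=> b; apply: val_inj => /=.
  by rewrite -lastI theadE.
Qed.

Lemma sum_rcons k (F : k.+1.-tuple bool -> M) :
  \sum_(b : k.+1.-tuple bool) F b =
  \sum_(t : k.-tuple bool) (F [tuple of rcons t true] + F [tuple of rcons t false]).
Proof.
rewrite (reindex _ (onW_bij _ (tuple_rcons_bij k))) /=.
rewrite -(pair_bigA _ (fun (t : k.-tuple bool) (x : bool) => F [tuple of rcons t x])) /=.
by apply: eq_bigr => t _; rewrite big_bool.
Qed.

Lemma CTs_rec k X Y mu : CTs k.+1 X Y mu =
  ((-1) ^+ nth false (false :: mu) k) *: (Y k *m CTs k X Y mu)
  + CTs k X Y mu *m X k.
Proof.
rewrite /CTs sum_rcons.
rewrite mulmx_sumr scaler_sumr mulmx_suml -big_split /=.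
apply: eq_bigr => t _ /=.
rewrite !sign_rcons !prodY_rcons !prodX_rcons /= andbT andbF addn0.
rewrite mulr1 mul1r exprD -scalerA -scalemxAr -scalemxAl !mulmxE !mulrA.
by rewrite !scalerA mulrC.
Qed.
End Rec.

Section Five.
Variable C : numClosedFieldType.
Local Notation M := 'M[C]_4.

Lemma foldl_commute (G : nat -> M -> M) x W s :
  (forall a b W, G a (G b W) = G b (G a W)) ->
  foldl (fun W r => G r W) (G x W) s = G x (foldl (fun W r => G r W) W s).
Proof.
move=> comm; elim: s W => [//|y s IH] W /=.
by rewrite comm IH.
Qed.

Lemma foldl_perm (G : nat -> M -> M) W s s' :
  (forall a b W, G a (G b W) = G b (G a W)) -> perm_eq s s' ->
  foldl (fun W r => G r W) W s = foldl (fun W r => G r W) W s'.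
Proof.
move=> comm; elim: s s' W => [|x s IH] s' W.
  by rewrite perm_sym => /perm_nilP ->.
move=> pe; have xin : x \in s' by rewrite -(perm_mem pe) mem_head.
case/splitPr: xin pe => s1 s2 pe.
rewrite foldl_cat /= -foldl_commute // -foldl_cat -IH //.
rewrite -(perm_cons x) (perm_trans pe) //.
by rewrite (perm_catCA s1 [:: x] s2).
Qed.

Lemma foldl_scale (G : nat -> M -> M) (c : C) W s :
  (forall a c W, G a (c *: W) = c *: G a W) ->
  foldl (fun W r => G r W) (c *: W) s = c *: foldl (fun W r => G r W) W s.
Proof.
move=> lin; elim: s W => [//|y s IH] W /=.
by rewrite lin IH.
Qed.

Definition PsiAx (Psi : 'I_2 -> bool -> M -> M) :=
  [/\ (forall a b e f W, Psi a e (Psi b f W) = Psi b f (Psi a e W)),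
      (forall a e W, Psi a e (Psi a (~~ e) W) = 0),
      (forall a e W, Psi a e (Psi a e (Psi a e W)) = 4%:R *: Psi a e W) &
      (forall a e c W, Psi a e (c *: W) = c *: Psi a e W)].

Definition fiveP (qf : nat -> 'I_2) (ef : nat -> bool) r1 r2 (c : C) :=
  [/\ (1 <= r1)%N, (r1 < r2)%N, (r2 < 5)%N &
    forall Psi, PsiAx Psi -> forall W,
      foldl (fun W r => Psi (qf r) (ef r) W) W (iota 0 5) =
      c *: foldl (fun W r => Psi (qf r) (ef r) W) W
             [seq r <- iota 0 5 | (r != r1) && (r != r2)]].

Lemma triple qf ef p1 p2 p3 :
  let rest := [seq r <- iota 0 5 | r \notin [:: p1; p2; p3]] in
  perm_eq (iota 0 5) (p1 :: p2 :: p3 :: rest) ->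
  perm_eq [seq r <- iota 0 5 | (r != p2) && (r != p3)] (p1 :: rest) ->
  qf p1 = qf p2 -> qf p2 = qf p3 -> (1 <= p2)%N -> (p2 < p3)%N -> (p3 < 5)%N ->
  exists r1 r2 c, fiveP qf ef r1 r2 c.
Proof.
move=> rest pe1 pe2 q12 q23 h1 h2 h3.
have gen : forall Psi, PsiAx Psi -> forall W,
   foldl (fun W r => Psi (qf r) (ef r) W) W (iota 0 5) =
   foldl (fun W r => Psi (qf r) (ef r) W)
     (Psi (qf p3) (ef p3) (Psi (qf p2) (ef p2) (Psi (qf p1) (ef p1) W))) rest.
  move=> Psi [cm _ _ _] W.
  by rewrite (foldl_perm (G := fun r => Psi (qf r) (ef r)) _ _ pe1).
case E: ((ef p1 == ef p2) && (ef p2 == ef p3)).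
- move/andP: E => [/eqP e12 /eqP e23].
  exists p2, p3, 4%:R; split => // Psi ax W; rewrite gen //.
  case: ax => cm an cu li.
  rewrite -q23 -q12 -e23 -e12 cu foldl_scale; last by move=> a c0 W0; exact: li.
  congr (_ *: _).
  by rewrite (foldl_perm (G := fun r => Psi (qf r) (ef r)) _ _ pe2).
- exists 1%N, 2%N, 0; split => // Psi ax W; rewrite gen // scale0r.
  case: ax => cm an cu li.
  have an' : forall a e W0, Psi a (~~ e) (Psi a e W0) = 0.
    by move=> a e W0; have := an a (~~ e) W0; rewrite negbK.
  have li0 : forall a e, Psi a e 0 = 0.
    by move=> a e; have := li a e 0 0; rewrite !scale0r.
  have Z : forall W0, Psi (qf p3) (ef p3) (Psi (qf p2) (ef p2) (Psi (qf p1) (ef p1) W0)) = 0.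
    move=> W0.
    case: (boolP (ef p1 == ef p2)) => [/eqP e12 | ne12].
    + have ne23 : ef p3 = ~~ ef p2.
        by move: E; rewrite e12 eqxx /=; case: (ef p2); case: (ef p3).
      by rewrite (cm (qf p2)) (cm (qf p3)) -q23 ne23 an' li0.
    + have ne : ef p2 = ~~ ef p1 by move: ne12; case: (ef p1); case: (ef p2).
      by rewrite -q12 ne an' li0.
  rewrite Z.
  have H := @foldl_scale (fun r => Psi (qf r) (ef r)) 0 0 rest
    (fun a c0 W0 => li _ _ c0 W0).
  rewrite !scale0r in H; exact: H.
Qed.

Lemma I2eq (x y : 'I_2) : (x == 0) = (y == 0) -> x = y.
Proof.
by case: x => [[|[|?]] ?] //; case: y => [[|[|?]] ?] //= _; apply: val_inj.
Qed.

Lemma five qf ef : exists r1 r2 c, fiveP qf ef r1 r2 c.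
Proof.
case H0: (qf 0%N == 0); case H1: (qf 1%N == 0); case H2: (qf 2%N == 0);
case H3: (qf 3%N == 0); case H4: (qf 4%N == 0);
first [ (apply: (@triple qf ef 0 1 2); [by [] | by [] | by apply: I2eq; rewrite ?H0 ?H1 ?H2 ?H3 ?H4 | by apply: I2eq; rewrite ?H0 ?H1 ?H2 ?H3 ?H4 | by [] | by [] | by []]) | (apply: (@triple qf ef 0 1 3); [by [] | by [] | by apply: I2eq; rewrite ?H0 ?H1 ?H2 ?H3 ?H4 | by apply: I2eq; rewrite ?H0 ?H1 ?H2 ?H3 ?H4 | by [] | by [] | by []]) | (apply: (@triple qf ef 0 1 4); [by [] | by [] | by apply: I2eq; rewrite ?H0 ?H1 ?H2 ?H3 ?H4 | by apply: I2eq; rewrite ?H0 ?H1 ?H2 ?H3 ?H4 | by [] | by [] | by []]) | (apply: (@triple qf ef 0 2 3); [by [] | by [] | by apply: I2eq; rewrite ?H0 ?H1 ?H2 ?H3 ?H4 | by apply: I2eq; rewrite ?H0 ?H1 ?H2 ?H3 ?H4 | by [] | by [] | by []]) | (apply: (@triple qf ef 0 2 4); [by [] | by [] | by apply: I2eq; rewrite ?H0 ?H1 ?H2 ?H3 ?H4 | by apply: I2eq; rewrite ?H0 ?H1 ?H2 ?H3 ?H4 | by [] | by [] | by []]) | (apply: (@triple qf ef 0 3 4); [by [] | by [] | by apply: I2eq; rewrite ?H0 ?H1 ?H2 ?H3 ?H4 | by apply: I2eq; rewrite ?H0 ?H1 ?H2 ?H3 ?H4 | by [] | by [] | by []]) |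 (apply: (@triple qf ef 1 2 3); [by [] | by [] | by apply: I2eq; rewrite ?H0 ?H1 ?H2 ?H3 ?H4 | by apply: I2eq; rewrite ?H0 ?H1 ?H2 ?H3 ?H4 | by [] | by [] | by []]) | (apply: (@triple qf ef 1 2 4); [by [] | by [] | by apply: I2eq; rewrite ?H0 ?H1 ?H2 ?H3 ?H4 | by apply: I2eq; rewrite ?H0 ?H1 ?H2 ?H3 ?H4 | by [] | by [] | by []]) | (apply: (@triple qf ef 1 3 4); [by [] | by [] | by apply: I2eq; rewrite ?H0 ?H1 ?H2 ?H3 ?H4 | by apply: I2eq; rewrite ?H0 ?H1 ?H2 ?H3 ?H4 | by [] | by [] | by []]) | (apply: (@triple qf ef 2 3 4); [by [] | by [] | by apply: I2eq; rewrite ?H0 ?H1 ?H2 ?H3 ?H4 | by apply: I2eq; rewrite ?H0 ?H1 ?H2 ?H3 ?H4 | by [] | by [] | by []]) ].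
Qed.
End Five.


Section Assemble.
Variable C : numClosedFieldType.
Local Notation M := 'M[C]_4.

Definition WL (X : nat -> M) (E : nat -> bool) (W : M) (s : seq nat) :=
  foldl (fun W j => Phi (X j) (E j) W) W s.

Lemma CT_fold k X Y mu (O : M) : O *m O = 1%:M ->
  (forall i, Y i = - (O *m X i *m O)) ->
  CTs k X Y mu = O *m WL X (fun j => nth false (false :: mu) j) O (iota 0 k).
Proof.
move=> HO HY; elim: k => [|k IH].
  rewrite /CTs /WL /=.
  under eq_bigr => t _ do rewrite !big_ord0 expr0 scale1r mulmx1.
  by rewrite sumr_const card_tuple expn0 HO.
have -> : iota 0 k.+1 = rcons (iota 0 k) k by rewrite -addn1 iotaD cats1.
rewrite CTs_rec IH HY /WL foldl_rcons -/(WL _ _ _ _) /Phi.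
set W := WL _ _ _ _.
rewrite mulmxDr -scalemxAr !mulmxA mulNmx -(mulmxA (O *m X k)) HO mulmx1.
rewrite mulNmx addrC; congr (_ + _).
by case: (nth false (false :: mu) k); rewrite /sg /= ?expr1 ?expr0 ?scaleN1r ?opprK ?scale1r.
Qed.

Definition Xf (U : nat -> M) (n : seq nat) (q : seq 'I_2) j :=
  htilde U (nth 0 q j) (nth 0%N n j).
Definition Ef (mu : seq bool) j := nth false (false :: mu) j.

Lemma ctensor_fold (U : nat -> M) O k n q mu :
  hermitian_mx O -> unitary_mx O ->
  ctensor U O k n q mu = O *m WL (Xf U n q) (Ef mu) O (iota 0 k).
Proof.
move=> Hh Hu; rewrite ctensorE; apply: CT_fold; first exact: OO.
by move=> i; rewrite /hbar invO.
Qed.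

Lemma foldl_map_ (A B R : Type) (f : R -> B -> R) (g : A -> B) z s :
  foldl f z (map g s) = foldl (fun z x => f z (g x)) z s.
Proof. by elim: s z => //= x s IH z; rewrite IH. Qed.

Lemma WL_map X E W (J : seq nat) :
  WL X E W J = WL (fun p => X (nth 0%N J p)) (fun p => E (nth 0%N J p)) W
                  (iota 0 (size J)).
Proof. by rewrite /WL -{1}(mkseq_nth 0%N J) /mkseq foldl_map_. Qed.

Lemma WL_eq_in X E X' E' W s :
  (forall j, j \in s -> X j = X' j /\ E j = E' j) ->
  WL X E W s = WL X' E' W s.
Proof.
rewrite /WL; elim: s W => //= x s IH W h.
have [-> ->] := h x (mem_head _ _).
by apply: IH => j js; apply: h; rewrite inE js orbT.
Qed.

Lemma WL_cat X E W s1 s2 : WL X E W (s1 ++ s2) = WL X E (WL X E W s1) s2.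
Proof. exact: foldl_cat. Qed.

Lemma WL_scale X E c W s : WL X E (c *: W) s = c *: WL X E W s.
Proof. by rewrite /WL; elim: s W => //= x s IH W; rewrite Phi_scale IH. Qed.

End Assemble.

Local Close Scope ring_scope.

Lemma zip_self (A B : Type) (f : A -> B) (l : seq A) :
  zip l (map f l) = map (fun j => (j, f j)) l.
Proof. by elim: l => //= x l ->. Qed.

Lemma delete2E (T : Type) (x0 : T) (s : seq T) j1 j2 :
  delete2 s j1 j2 =
  map (nth x0 s) [seq j <- iota 0 (size s) | (j != j1) && (j != j2)].
Proof.
rewrite /delete2.
have -> : zip (iota 0 (size s)) s = map (fun j => (j, nth x0 s j)) (iota 0 (size s)).
  by rewrite -zip_self; congr zip; rewrite -/(mkseq _ _) mkseq_nth.
by rewrite filter_map -map_comp.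
Qed.

Lemma iota_split k i : (2 <= i)%N -> (i + 2 < k)%N ->
  iota 0 k = iota 0 (i - 2) ++ map (addn (i - 2)) (iota 0 5)
             ++ iota (i + 3) (k - (i + 3)).
Proof.
move=> h1 h2.
rewrite {1}(_ : k = (i - 2) + (5 + (k - (i + 3))))%N; last by lia.
rewrite !iotaD add0n -iotaDl addn0.
by rewrite (_ : (i - 2 + 5 = i + 3)%N); last by lia.
Qed.

Lemma J_split k i r1 r2 : (2 <= i)%N -> (i + 2 < k)%N -> (r1 < r2 < 5)%N ->
  [seq j <- iota 0 k | (j != i - 2 + r1) && (j != i - 2 + r2)] =
  iota 0 (i - 2) ++ map (addn (i - 2)) [seq r <- iota 0 5 | (r != r1) && (r != r2)]
  ++ iota (i + 3) (k - (i + 3)).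
Proof.
move=> h1 h2 /andP [h3 h4].
rewrite (iota_split h1 h2) !filter_cat.
congr (_ ++ _ ++ _).
- apply/all_filterP/allP => j; rewrite mem_iota => /andP [_ hj].
  by apply/andP; split; apply/eqP; lia.
- rewrite filter_map; congr map; apply: eq_filter => r /=.
  by rewrite !eqn_add2l.
- apply/all_filterP/allP => j; rewrite mem_iota => /andP [hj _].
  by apply/andP; split; apply/eqP; lia.
Qed.

Lemma size_K5 r1 r2 : (r1 < r2 < 5)%N ->
  size [seq r <- iota 0 5 | (r != r1) && (r != r2)] = 3%N.
Proof.
move=> /andP [h1 h2].
case: r1 h1 => [|[|[|[|[|r1]]]]] h1; case: r2 h1 h2 => [|[|[|[|[|r2]]]]] h1 h2 //;
  lia.
Qed.

Lemma ws_le L k n : window_string L k n ->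
  forall a b, a <= b -> b < k -> nth 0 n b <= nth 0 n a.
Proof.
case=> [sz [srt _]] a b hab hb.
have tr : transitive geq by move=> x y z h1 h2; exact: leq_trans h2 h1.
have rf : reflexive geq by move=> x; exact: leqnn.
have := sorted_leq_nth tr rf 0 srt; move/(_ a b) => /=.
by rewrite !inE sz; apply => //; lia.
Qed.

Lemma ws_rng L k n : window_string L k n ->
  forall a, a < k -> 1 <= nth 0 n a <= L.
Proof.
case=> [sz [_ rng]] a ha.
by move/all_nthP: rng => /(_ 0 a); rewrite sz; apply.
Qed.

Lemma five_window L k n : window_string L k n -> 4 * L < k ->
  exists i, five_equal_at n i.
Proof.
move=> ws hk.
have sz : size n = k by case: ws.
have claim : forall t, 4 * t < k ->
    (exists i, five_equal_at n i) \/ nth 0 n (4 * t) + t <= L.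
  elim=> [|t IH] ht.
    by right; have := ws_rng ws (a:=0) ht; rewrite muln0; lia.
  have ht' : 4 * t < k by lia.
  case: (IH ht') => [hl | h]; first by left.
  case: (eqVneq (nth 0 n (4 * t.+1)) (nth 0 n (4 * t))) => [e | ne].
  - left; exists (4 * t + 2); split; first by lia.
    split; first by rewrite sz; lia.
    move=> j /andP [hj1 hj2].
    have a1 := ws_le ws (a := 4 * t) (b := j).
    have a2 := ws_le ws (a := j) (b := 4 * t.+1).
    have a3 := ws_le ws (a := 4 * t) (b := 4 * t + 2).
    have a4 := ws_le ws (a := 4 * t + 2) (b := 4 * t.+1).
    have e' : 4 * t + 2 - 2 = 4 * t by lia.
    rewrite e' in hj1.
    have e2 : 4 * t + 2 + 2 = 4 * t.+1 by lia.
    rewrite e2 in hj2.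
    have := a1 hj1; have := a2 hj2; have := a3; have := a4.
    lia.
  - right.
    have := ws_le ws (a := 4 * t) (b := 4 * t.+1).
    lia.
case: (claim L hk) => // h.
have := ws_rng ws (a := 4 * L) hk; lia.
Qed.

Lemma foldl_eq_in (A R : Type) (f g : R -> A -> R) z (s : seq A) (P : A -> Prop) :
  (forall x, P x -> forall z, f z x = g z x) -> (forall x, List.In x s -> P x) ->
  foldl f z s = foldl g z s.
Proof.
move=> h; elim: s z => //= x s IH z hs.
rewrite h; last by apply: hs; left.
by apply: IH => y hy; apply: hs; right.
Qed.

Lemma inP' (x : nat) s : List.In x s -> x \in s.
Proof. by elim: s => //= y s IH [->|/IH]; rewrite inE ?eqxx // => ->; rewrite orbT. Qed.

Lemma part1 (C : numClosedFieldType) L k n (q : seq 'I_2) mu :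
  4 * L < k -> window_string L k n -> size q = k -> size mu = k.-1 ->
  exists i : nat, five_equal_at n i /\
    exists (j1 j2 : nat) (q' : seq 'I_2) (mu' : seq bool) (c : C),
      [/\ (i - 2 <= j1 < j2)%N, (j2 <= i + 2)%N,
          size q' = (k - 2)%N, size mu' = (k - 3)%N &
      forall (U : nat -> 'M[C]_4) (O : 'M[C]_4),
        (forall m, (1 <= m <= L)%N -> unitary_mx (U m)) ->
        hermitian_mx O -> unitary_mx O ->
        ctensor U O k n q mu
        = (c *: ctensor U O (k - 2) (delete2 n j1 j2) q' mu')%R]
      /\ window_string L (k - 2) (delete2 n j1 j2).
Proof.
move=> hk ws sq smu.
have [i fe] := five_window ws hk.
have [h2 [hik heq]] := fe.
have sz : size n = k by case: ws.
rewrite sz in hik.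
pose m := nth 0 n i.
have mrng : 1 <= m <= L by apply: (ws_rng ws); lia.
have [r1 [r2 [c [hr1 hr12 hr2 P5]]]] :=
  five C (fun r => nth 0%R q (i - 2 + r)) (fun r => nth false (false :: mu) (i - 2 + r)).
have hr : r1 < r2 < 5 by rewrite hr12 hr2.
have hJ := J_split h2 hik hr.
set J := [seq j <- iota 0 k | _] in hJ.
have szJ : size J = k - 2.
  by rewrite hJ !size_cat size_map size_K5 // !size_iota; lia.
have J0 : J = 0 :: behead J.
  rewrite /J; case Hk: k => [|k']; first lia.
  rewrite /= ifT //; apply/andP; split; apply/eqP; lia.
exists i; split => //.
exists (i - 2 + r1), (i - 2 + r2), (map (nth 0%R q) J),
  (map (nth false (false :: mu)) (behead J)), c.
split; last first.
  rewrite (delete2E 0) sz; split; first by rewrite size_map szJ.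
  split.
    have tr : transitive geq by move=> x y z h1 h3; exact: leq_trans h3 h1.
    apply: (subseq_sorted tr _ (proj1 (proj2 ws))).
    rewrite -{2}(mkseq_nth 0 n) /mkseq sz; apply: map_subseq; exact: filter_subseq.
  rewrite all_map; apply/allP => j; rewrite mem_filter mem_iota => /andP [_ /andP [_ hj]].
  by apply: (ws_rng ws); lia.
split; [lia | lia | by rewrite size_map szJ | by rewrite size_map size_behead szJ; lia | ].
move=> U O HU Hh Hu.
rewrite !ctensor_fold // (delete2E 0) sz.
rewrite scalemxAr; congr (O *m _)%R.
have FM : false :: map (nth false (false :: mu)) (behead J) = map (Ef mu) J.
  by rewrite [in RHS]J0.
rewrite -szJ [in RHS](WL_eq_in (X' := fun p => Xf U n q (nth 0 J p))
                       (E' := fun p => Ef mu (nth 0 J p))); last first.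
  move=> p; rewrite mem_iota add0n => /andP [_ hp].
  by rewrite /Xf /Ef FM !(nth_map 0).
rewrite -[in RHS]WL_map.
rewrite {1}(iota_split h2 hik) hJ !WL_cat.
set W0 := WL _ _ O (iota 0 (i - 2)).
pose Psi (a : 'I_2) (e : bool) (W : 'M[C]_4) := Phi (htilde U a m) e W.
have Umu : unitary_mx (U m) by apply: HU.
have ax : PsiAx Psi.
  split.
  - by move=> a b e f W; apply: Phi_comm; apply: htildeC.
  - by move=> a e W; apply: Phi_ann; apply: htilde2.
  - by move=> a e W; apply: Phi_cube; apply: htilde2.
  - by move=> a e c0 W; apply: Phi_scale.
have mid : forall s, (forall r, r \in s -> r < 5) ->
    WL (Xf U n q) (Ef mu) W0 (map (addn (i - 2)) s) =
    foldl (fun W r => Psi (nth 0%R q (i - 2 + r)) (nth false (false :: mu) (i - 2 + r)) W) W0 s.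
  move=> s hs; rewrite /WL foldl_map_.
  apply: (@foldl_eq_in _ _ _ _ _ _ (fun r => r < 5)); last by move=> x /inP' /hs.
  move=> r hr5 W; rewrite /Psi /Xf /Ef heq //; lia.
rewrite !mid.
- by rewrite P5 // WL_scale.
all: by move=> r; rewrite ?mem_filter mem_iota => /= h; lia.
Qed.

Unset Implicit Arguments.
Local Open Scope ring_scope.

Theorem mainTheorem4 (C : numClosedFieldType) (L : nat) (HL : (1 <= L)%N) :
  (forall (k : nat) (n : seq nat) (q : seq 'I_2) (mu : seq bool),
    (4 * L < k)%N -> window_string L k n ->
    size q = k -> size mu = k.-1 ->
    exists i : nat, five_equal_at n i /\
      exists (j1 j2 : nat) (q' : seq 'I_2) (mu' : seq bool) (c : C),
        [/\ (i - 2 <= j1 < j2)%N, (j2 <= i + 2)%N,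
            size q' = (k - 2)%N, size mu' = (k - 3)%N &
        forall (U : nat -> 'M[C]_4) (O : 'M[C]_4),
          (forall m, (1 <= m <= L)%N -> unitary_mx (U m)) ->
          hermitian_mx O -> unitary_mx O ->
          ctensor U O k n q mu
          = c *: ctensor U O (k - 2) (delete2 n j1 j2) q' mu']) /\
  (forall (k : nat) (n : seq nat) (q : seq 'I_2) (mu : seq bool),
    (1 <= k)%N -> window_string L k n -> size q = k -> size mu = k.-1 ->
    exists (k' : nat) (n' : seq nat) (q' : seq 'I_2) (mu' : seq bool) (c : C),
      [/\ (1 <= k' <= 4 * L)%N, window_string L k' n',
          size q' = k', size mu' = k'.-1 &
      forall (U : nat -> 'M[C]_4) (O : 'M[C]_4),
        (forall m, (1 <= m <= L)%N -> unitary_mx (U m)) ->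
        hermitian_mx O -> unitary_mx O ->
        ctensor U O k n q mu = c *: ctensor U O k' n' q' mu']).
Proof.
split.
  move=> k n q mu hk ws sq smu.
  have [i [fe [j1 [j2 [q' [mu' [c [[a b cc d e] _]]]]]]]] := part1 C hk ws sq smu.
  by exists i; split => //; exists j1, j2, q', mu', c; split.
suff H : forall K k n (q : seq 'I_2) (mu : seq bool), (k <= K)%N ->
    (1 <= k)%N -> window_string L k n -> size q = k -> size mu = k.-1 ->
    exists (k' : nat) (n' : seq nat) (q' : seq 'I_2) (mu' : seq bool) (c : C),
      [/\ (1 <= k' <= 4 * L)%N, window_string L k' n',
          size q' = k', size mu' = k'.-1 &
      forall (U : nat -> 'M[C]_4) (O : 'M[C]_4),
        (forall m, (1 <= m <= L)%N -> unitary_mx (U m)) ->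
        hermitian_mx O -> unitary_mx O ->
        ctensor U O k n q mu = c *: ctensor U O k' n' q' mu'].
  by move=> k n q mu; apply: (H k); exact: leqnn.
elim=> [|K IH] k n q mu hkK hk1 ws sq smu; first by lia.
case: (leqP k (4 * L)) => hkL.
  exists k, n, q, mu, 1; split => //; first by rewrite hk1 hkL.
  by move=> U O _ _ _; rewrite scale1r.
have [i [[h2 [hik _]] [j1 [j2 [q' [mu' [c [[_ _ sq' smu' E] ws']]]]]]]] :=
  part1 C hkL ws sq smu.
have hk2 : (k - 2 <= K)%N by lia.
have hk3 : (1 <= k - 2)%N by lia.
have smu2 : size mu' = (k - 2).-1 by rewrite smu'; lia.
have [k' [n' [q'' [mu'' [c' [hk' ws'' sq'' smu'' E']]]]]] :=
  IH (k - 2)%N (delete2 n j1 j2) q' mu' hk2 hk3 ws' sq' smu2.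
exists k', n', q'', mu'', (c * c'); split => // U O HU Hh Hu.
by rewrite E // E' // scalerA.
Qed.
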